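(* Fix $\theta=\pi/8$ and, for an angle $\alpha$, let $\phi_\alpha=\cos(\alpha)|0\rangle+\sin(\alpha)|1\rangle$. Define the single-qubit states $\phi_{0,0}=\phi_{-\theta}$, $\phi_{0,1}=\phi_{\theta}$, $\phi_{1,0}=\phi_{\pi/2-\theta}$, $\phi_{1,1}=\phi_{\pi/2+\theta}$. Consider the following two-party quantum protocol (the ''biased coin flipping protocol''): (1) Alice picks $b,x\in\{0,1\}$ uniformly at random and sends the qubit $\phi_{b,x}$ to Bob. (2) Bob picks $b'\in\{0,1\}$ uniformly at random and sends it to Alice. (3) Alice sends $b$ and $x$ to Bob. Bob checks them against the qubit received in step (1) by measuring it in the orthonormal basis $\{\phi_{0,x},\phi_{1,x}\}$ and verifying that the outcome is $\phi_{b,x}$. The result of the game is $err$ if the check fails (Alice is caught cheating) and $b\oplus b'$ otherwise. Then this protocol is a quantum coin flipping protocol with bias $\delta\le 0.42$.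
   Context: A quantum coin flipping protocol with bias $\delta$ is a quantum communication protocol between Alice and Bob at the end of which each decides on a value in $\{0,1,err\}$; let $c_A$ and $c_B$ denote Alice's and Bob's results. It is required that: (i) if both players are honest, then always $c_A=c_B$, $\Pr(c_A=err)=0$ and $\Pr(c_A=0)=\Pr(c_A=1)=1/2$; (ii) if one player is honest and the other follows an arbitrary (all-powerful quantum) strategy, then the honest player's result $c$ satisfies $\Pr(c=b)\le \tfrac12+\delta$ for every $b\in\{0,1\}$. Classical bits sent as qubits are measured by the receiver in the computational basis $\{|0\rangle,|1\rangle\}$. *)

(* Defs.v *)
From HB Require Import structures.
From mathcomp Require Import all_boot all_order all_algebra.
From mathcomp Require Import reals trigo.
From mathcomp Require Import complex mxtens.

Set Implicit Arguments.
Unset Strict Implicit.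
Unset Printing Implicit Defensive.

Import Order.TTheory GRing.Theory Num.Theory.
Local Open Scope ring_scope.
Local Open Scope complex_scope.

Section CoinFlip.
Variable R : realType.
Local Notation C := R[i].

Definition adjmx {m n} (A : 'M[C]_(m, n)) : 'M[C]_(n, m) := (map_mx conjc A)^T.

Definition psd {n} (A : 'M[C]_n) : Prop :=
  forall v : 'cV[C]_n, 0 <= (adjmx v *m A *m v) 0 0.

Definition density {n} (rho : 'M[C]_n) : Prop := psd rho /\ \tr rho = 1.

Definition povm {I : finType} {n} (E : I -> 'M[C]_n) : Prop :=
  (forall i, psd (E i)) /\ \sum_(i : I) E i = 1%:M.

Definition ketbra (v : 'cV[C]_2) : 'M[C]_2 := v *m adjmx v.

Definition theta : R := pi / 8.

Definition phi (a : R) : 'cV[C]_2 :=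
  \col_(i < 2) (if i == ord0 then (cos a)%:C else (sin a)%:C).

Definition angle (b x : bool) : R :=
  match b, x with
  | false, false => - theta
  | false, true => theta
  | true, false => pi / 2 - theta
  | true, true => pi / 2 + theta
  end.

Definition phibx (b x : bool) : 'cV[C]_2 := phi (angle b x).

(* projector onto phi_{b,x}: Bob's measurement in the basis
   {phi_{0,x}, phi_{1,x}} has outcome phi_{o,x} with operator Pbx o x *)
Definition Pbx (o x : bool) : 'M[C]_2 := ketbra (phibx o x).

(* Bob's result when Alice announced (b,x), Bob sent b', and Bob's
   measurement outcome was phi_{o,x}.  None stands for err. *)
Definition bob_result (b x b' o : bool) : option bool :=
  if o == b then Some (b (+) b') else None.

Definition honest_prob (ca cb : option bool) : C :=
  \sum_(b : bool) \sum_(x : bool) \sum_(b' : bool) \sum_(o : bool)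
     (1 / 8) * \tr (Pbx o x *m Pbx b x)
     * ((ca == Some (b (+) b')) && (cb == bob_result b x b' o))%:R.

Definition honest_probA (ca : option bool) : C :=
  \sum_(cb : option bool) honest_prob ca cb.

(* ---- cheating Alice (arbitrary quantum strategy) vs honest Bob ----
   Alice prepares a state rho on (qubit sent to Bob) (x) (her private
   register C^d); on receiving b' she performs a POVM M b' on her register
   whose outcome (b,x) is what Bob reads from her step-(3) message. *)
Definition cheatA_strategy (d : nat) (rho : 'M[C]_(2 * d))
  (M : bool -> bool * bool -> 'M[C]_d) : Prop :=
  density rho /\ forall b', povm (M b').

Definition cheatA_probB (d : nat) (rho : 'M[C]_(2 * d))
  (M : bool -> bool * bool -> 'M[C]_d) (c : option bool) : C :=
  \sum_(b' : bool) \sum_(b : bool) \sum_(x : bool) \sum_(o : bool)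
     (1 / 2) * \tr ((Pbx o x *t M b' (b, x)) *m rho)
     * (c == bob_result b x b' o)%:R.

(* ---- cheating Bob (arbitrary quantum strategy) vs honest Alice ----
   Bob holds an ancilla C^d in a state sigma of his choice; on receiving
   phi_{b,x} he performs a POVM E on (qubit) (x) (ancilla) whose outcome is
   the bit b' he sends. *)
Definition cheatB_strategy (d : nat) (sigma : 'M[C]_d)
  (E : bool -> 'M[C]_(2 * d)) : Prop :=
  density sigma /\ povm E.

Definition cheatB_probA (d : nat) (sigma : 'M[C]_d)
  (E : bool -> 'M[C]_(2 * d)) (c : option bool) : C :=
  \sum_(b : bool) \sum_(x : bool) \sum_(b' : bool)
     (1 / 4) * \tr (E b' *m (Pbx b x *t sigma))
     * (c == Some (b (+) b'))%:R.

Definition coin_flipping_with_bias (delta : R) : Prop :=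
  [/\ (forall ca cb : option bool, ca <> cb -> honest_prob ca cb = 0),
      honest_probA None = 0,
      honest_probA (Some false) = 1 / 2 &
      honest_probA (Some true) = 1 / 2]
  /\
  (forall (d : nat) (rho : 'M[C]_(2 * d)) (M : bool -> bool * bool -> 'M[C]_d),
      cheatA_strategy rho M ->
      forall b : bool, cheatA_probB rho M (Some b) <= (1 / 2 + delta)%:C)
  /\
  (forall (d : nat) (sigma : 'M[C]_d) (E : bool -> 'M[C]_(2 * d)),
      cheatB_strategy sigma E ->
      forall b : bool, cheatB_probA sigma E (Some b) <= (1 / 2 + delta)%:C).

End CoinFlip.

(* Main.v *)
Require Import Defs.
From HB Require Import structures.
From mathcomp Require Import all_boot all_order all_algebra.
From mathcomp Require Import reals trigo.
From mathcomp Require Import complex mxtens spectral.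
From mathcomp Require Import ring lra.
Import Order.TTheory GRing.Theory Num.Theory Num.Def.
Set Implicit Arguments.
Unset Strict Implicit.
Unset Printing Implicit Defensive.
Local Open Scope ring_scope.

Section Gen.
Variable R : realType.
Local Notation C := R[i].

Lemma conjCE (x : C) : conjC x = conjc x.
Proof. by []. Qed.

Lemma adjmxE m n (A : 'M[C]_(m, n)) : adjmx A = (A ^t conjC)%sesqui.
Proof. by apply/matrixP => i j; rewrite !mxE. Qed.

Lemma adjmxK m n (A : 'M[C]_(m, n)) : adjmx (adjmx A) = A.
Proof. by apply/matrixP => i j; rewrite !mxE conjcK. Qed.

Lemma adjmxM m n p (A : 'M[C]_(m, n)) (B : 'M[C]_(n, p)) :
  adjmx (A *m B) = adjmx B *m adjmx A.
Proof. by rewrite /adjmx map_mxM trmx_mul. Qed.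

Lemma adjmxD m n (A B : 'M[C]_(m, n)) : adjmx (A + B) = adjmx A + adjmx B.
Proof. by apply/matrixP => i j; rewrite !mxE rmorphD. Qed.

Lemma adjmxZ m n (c : C) (A : 'M[C]_(m, n)) : adjmx (c *: A) = conjc c *: adjmx A.
Proof. by apply/matrixP => i j; rewrite !mxE rmorphM. Qed.

Lemma adjmx_tens m n p q (A : 'M[C]_(m, n)) (B : 'M[C]_(p, q)) :
  adjmx (A *t B) = adjmx A *t adjmx B.
Proof. by rewrite /adjmx map_mxT trmx_tens. Qed.

Definition qf n (A : 'M[C]_n) (v : 'cV[C]_n) := (adjmx v *m A *m v) 0 0.

Definition bf n (A : 'M[C]_n) (u v : 'cV[C]_n) := (adjmx u *m A *m v) 0 0.

Lemma bf_delta n (A : 'M[C]_n) (i j : 'I_n) : bf A (delta_mx i 0) (delta_mx j 0) = A i j.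
Proof.
rewrite /bf.
have -> : adjmx (delta_mx i 0 : 'cV[C]_n) = delta_mx 0 i.
  apply/matrixP => a b; rewrite !mxE.
  by rewrite conjc_nat andbC.
by rewrite -rowE -colE !mxE.
Qed.

Lemma qf_lin n (A : 'M[C]_n) u w (c : C) :
  qf A (u + c *: w) = bf A u u + c * bf A u w + conjc c * bf A w u
     + conjc c * c * bf A w w.
Proof.
rewrite /qf /bf adjmxD adjmxZ !mulmxDl !mulmxDr -!scalemxAl -!scalemxAr !mxE.
by rewrite !addrA mulrA.
Qed.

Lemma psd_herm_entry n (A : 'M[C]_n) : psd A -> forall i j : 'I_n, A j i = conjc (A i j).
Proof.
move=> hA i j.
have h1 := hA (delta_mx i 0). have h2 := hA (delta_mx j 0).
have h3 := hA (delta_mx i 0 + 1 *: delta_mx j 0).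
have h4 := hA (delta_mx i 0 + 'i%C *: delta_mx j 0).
move: h3 h4; rewrite -/(qf _ _) -/(qf _ _) !qf_lin !bf_delta.
move: h1 h2; rewrite -/(bf _ _ _) -/(bf _ _ _) !bf_delta.
move=> /ger0_Im h1 /ger0_Im h2 /ger0_Im h3 /ger0_Im h4.
move: h1 h2 h3 h4.
case: (A i i) => a1 b1; case: (A j j) => a2 b2; case: (A i j) => a3 b3;
case: (A j i) => a4 b4 /= h1 h2 h3 h4.
apply/eqP; rewrite eq_complex /=; apply/andP; split; apply/eqP.
  move: h4; rewrite h1 h2. move=> h4. lra.
move: h3; rewrite h1 h2. move=> h3. lra.
Qed.


Lemma psd_adj n (A : 'M[C]_n) : psd A -> adjmx A = A.
Proof.
move=> hA; apply/matrixP => i j; rewrite !mxE.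
by rewrite (psd_herm_entry hA i j) conjcK.
Qed.

Lemma psd_normal n (A : 'M[C]_n) : psd A -> A \is normalmx.
Proof.
move=> hA; apply/normalmxP; by rewrite -adjmxE psd_adj.
Qed.

Lemma diag_entry n m (M : 'M[C]_(m, n)) (A : 'M[C]_n) i :
  (M *m A *m adjmx M) i i = qf A (adjmx (row i M)).
Proof.
rewrite /qf adjmxK -row_mul !mxE; apply: eq_bigr => k _; rewrite !mxE.
by [].
Qed.

Lemma psd_spec n (A : 'M[C]_n) : psd A ->
  exists (P : 'M[C]_n) (d : 'rV[C]_n),
    [/\ A = adjmx P *m diag_mx d *m P, P *m adjmx P = 1%:M &
        forall i, 0 <= d 0 i].
Proof.
move=> hA; have /orthomx_spectralP E := psd_normal hA.
have U := spectral_unitarymx A.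
have PP : spectralmx A *m adjmx (spectralmx A) = 1%:M.
  by rewrite adjmxE; apply/unitarymxP.
have Ei : invmx (spectralmx A) = adjmx (spectralmx A).
  by rewrite adjmxE invmx_unitary.
exists (spectralmx A), (spectral_diag A); split => //.
  by rewrite -Ei.
move=> i.
move: E PP Ei; set P := spectralmx A; set D := spectral_diag A => E PP Ei.
have -> : D 0 i = (P *m A *m adjmx P) i i.
  by rewrite [in RHS]E Ei !mulmxA PP mul1mx -mulmxA PP mulmx1 mxE eqxx mulr1n.
by rewrite diag_entry; apply: hA.
Qed.

Lemma tr_psd n (X Y : 'M[C]_n) : psd X -> psd Y -> 0 <= \tr (X *m Y).
Proof.
move=> hX hY; have [P [d [EY PP hd]]] := psd_spec hY.
rewrite EY !mulmxA mxtrace_mulC !mulmxA.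
rewrite mul_mx_diag /mxtrace; apply: sumr_ge0 => i _; rewrite mxE.
by apply: mulr_ge0 => //; rewrite diag_entry; apply: hX.
Qed.

Lemma psd_diag n (f : 'rV[C]_n) : (forall i, 0 <= f 0 i) -> psd (diag_mx f).
Proof.
move=> hf v; rewrite mul_mx_diag !mxE; apply: sumr_ge0 => k _; rewrite !mxE.
rewrite mulrAC mulrC; apply: mulr_ge0 => //.
by rewrite mulrC mulcJ_ge0.
Qed.

Lemma qf_conj n m (M : 'M[C]_(m, n)) (F : 'M[C]_m) v :
  qf (adjmx M *m F *m M) v = qf F (M *m v).
Proof. by rewrite /qf adjmxM !mulmxA. Qed.

Lemma psd_conj n m (M : 'M[C]_(m, n)) (F : 'M[C]_m) :
  psd F -> psd (adjmx M *m F *m M).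
Proof. by move=> hF v; rewrite -/(qf _ _) qf_conj; apply: hF. Qed.

Lemma tens_diag m n (d : 'rV[C]_m) (e : 'rV[C]_n) :
  diag_mx d *t diag_mx e = diag_mx (\row_k (diag_mx d *t diag_mx e) k k).
Proof.
apply/matrixP => k l.
case: (mxtens_indexP k) => a j; case: (mxtens_indexP l) => a' j'.
rewrite !mxE !mxtens_indexK /= !eqxx !mulr1n.
have [->|ha] := eqVneq a a'; have [->|hj] := eqVneq j j'.
- by rewrite eqxx !mulr1n.
- rewrite mulr0n mulr0.
  have -> : (mxtens_index (a', j) == mxtens_index (a', j')) = false.
    apply/negbTE; apply: contra hj => /eqP /(congr1 (@mxtens_unindex _ _)).
    by rewrite !mxtens_indexK => [[->]].
  by rewrite mulr0n.
- rewrite mulr0n mul0r.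
  have -> : (mxtens_index (a, j') == mxtens_index (a', j')) = false.
    apply/negbTE; apply: contra ha => /eqP /(congr1 (@mxtens_unindex _ _)).
    by rewrite !mxtens_indexK => [[->]].
  by rewrite mulr0n.
- rewrite mulr0n mul0r.
  have -> : (mxtens_index (a, j) == mxtens_index (a', j')) = false.
    apply/negbTE; apply: contra ha => /eqP /(congr1 (@mxtens_unindex _ _)).
    by rewrite !mxtens_indexK => [[->]].
  by rewrite mulr0n.
Qed.

Lemma psd_tens m n (A : 'M[C]_m) (B : 'M[C]_n) : psd A -> psd B -> psd (A *t B).
Proof.
move=> hA hB.
have [P [d [EA _ hd]]] := psd_spec hA.
have [Q [e [EB _ he]]] := psd_spec hB.
rewrite EA EB -!tensmx_mul -adjmx_tens tens_diag.
apply: psd_conj; apply: psd_diag => k; rewrite mxE.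
case: (mxtens_indexP k) => a j; rewrite !mxE !mxtens_indexK /= !eqxx !mulr1n.
exact: mulr_ge0.
Qed.


Lemma tensmxDl m n p q (A B : 'M[C]_(m, n)) (M : 'M[C]_(p, q)) :
  (A + B) *t M = A *t M + B *t M.
Proof. by apply/matrixP => i j; rewrite !mxE mulrDl. Qed.

Lemma tensmxZl m n p q (s : C) (A : 'M[C]_(m, n)) (M : 'M[C]_(p, q)) :
  (s *: A) *t M = s *: (A *t M).
Proof. by apply/matrixP => i j; rewrite !mxE mulrA. Qed.

Lemma tensmxNl m n p q (A : 'M[C]_(m, n)) (M : 'M[C]_(p, q)) :
  (- A) *t M = - (A *t M).
Proof. by apply/matrixP => i j; rewrite !mxE mulNr. Qed.

Lemma tensmx_sumr m n p q (I : finType) (A : 'M[C]_(m, n)) (B : I -> 'M[C]_(p, q)) :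
  A *t (\sum_i B i) = \sum_i (A *t B i).
Proof.
apply/matrixP => i j; rewrite !summxE !mxE summxE mulr_sumr; apply: eq_bigr => k _.
by rewrite !mxE.
Qed.

Lemma mxtrace_tens m n (A : 'M[C]_m) (B : 'M[C]_n) : \tr (A *t B) = \tr A * \tr B.
Proof.
have -> : \tr A * \tr B = \sum_(p : 'I_m * 'I_n) (A p.1 p.1 * B p.2 p.2).
  rewrite /mxtrace mulr_suml; under eq_bigr do rewrite mulr_sumr.
  by rewrite pair_bigA.
rewrite /mxtrace.
rewrite (reindex (@mxtens_index m n)) /=; last first.
  by exists (@mxtens_unindex m n) => k _; rewrite ?mxtens_indexK ?mxtens_unindexK.
by apply: eq_bigr => -[i j] _; rewrite tensmxE.
Qed.

Lemma tens_scal1 m n (s : C) : (s%:M : 'M[C]_m) *t (1%:M : 'M[C]_n) = s%:M.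
Proof.
apply/matrixP => k l.
case: (mxtens_indexP k) => a j; case: (mxtens_indexP l) => a' j'.
rewrite tensmxE !mxE.
have [->|ha] := eqVneq a a'; have [->|hj] := eqVneq j j'.
- by rewrite !eqxx !mulr1n mulr1.
- rewrite mulr0n mulr0.
  have -> : (mxtens_index (a', j) == mxtens_index (a', j')) = false.
    apply/negbTE; apply: contra hj => /eqP /(congr1 (@mxtens_unindex _ _)).
    by rewrite !mxtens_indexK => [[->]].
  by rewrite mulr0n.
- rewrite mulr0n mul0r.
  have -> : (mxtens_index (a, j') == mxtens_index (a', j')) = false.
    apply/negbTE; apply: contra ha => /eqP /(congr1 (@mxtens_unindex _ _)).
    by rewrite !mxtens_indexK => [[->]].
  by rewrite mulr0n.
- rewrite mulr0n mul0r.
  have -> : (mxtens_index (a, j) == mxtens_index (a', j')) = false.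
    apply/negbTE; apply: contra ha => /eqP /(congr1 (@mxtens_unindex _ _)).
    by rewrite !mxtens_indexK => [[->]].
  by rewrite mulr0n.
Qed.

Lemma sum_option (F : option bool -> C) :
  \sum_cb F cb = F None + F (Some true) + F (Some false).
Proof.
rewrite (bigD1 None) //= (bigD1 (Some true)) //= (bigD1 (Some false)) //=.
rewrite big_pred0 ?addr0 ?addrA // => -[[]|] //.
Qed.

End Gen.

Section Spec.
Variable R : realType.
Local Notation C := R[i].
Local Open Scope complex_scope.

Definition cT : R := cos (theta R).
Definition sT : R := sin (theta R).

Definition ca (b x : bool) : R :=
  match b, x with false, _ => cT | true, false => sT | true, true => - sT end.
Definition sa (b x : bool) : R :=
  match b, x with false, false => - sT | false, true => sT | true, _ => cT end.

Lemma cos_angle b x : cos (angle R b x) = ca b x.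
Proof.
case: b; case: x; rewrite /angle /ca -/(cT) -/(sT) //=.
- by rewrite addrC cosDpihalf.
- by rewrite cosB cos_pihalf sin_pihalf mul0r mul1r add0r.
- by rewrite cosN.
Qed.

Lemma sin_angle b x : sin (angle R b x) = sa b x.
Proof.
case: b; case: x; rewrite /angle /sa -/(cT) -/(sT) //=.
- by rewrite addrC sinDpihalf.
- by rewrite sinB cos_pihalf sin_pihalf mul0r mul1r subr0.
- by rewrite sinN.
Qed.

Lemma F1 : cT ^+ 2 + sT ^+ 2 = 1.
Proof. exact: cos2Dsin2. Qed.

Lemma hk : cos (pi / 4 : R) ^+ 2 = 1 / 2.
Proof.
have := cos_mulr2n (pi / 4 : R).
have -> : (pi / 4 : R) *+ 2 = pi / 2 by rewrite mulr2n; field.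
rewrite cos_pihalf => h.
have : cos (pi / 4 : R) ^+ 2 *+ 2 = 1 by rewrite -[LHS]subr0 h; ring.
rewrite mulr2n => h2; lra.
Qed.

Lemma hc : cT ^+ 2 = (1 + cos (pi / 4 : R)) / 2.
Proof.
have := cos_mulr2n (theta R).
have -> : theta R *+ 2 = pi / 4 by rewrite /theta mulr2n; field.
rewrite -/cT mulr2n => h; rewrite h; field; done.
Qed.

Lemma F2 : cT ^+ 2 * sT ^+ 2 = 1 / 8.
Proof.
have e : sT ^+ 2 = 1 - cT ^+ 2 by rewrite -F1; ring.
rewrite e hc; have := hk; set k := cos _ => h.
have -> : (1 + k) / 2 * (1 - (1 + k) / 2) = (1 - k ^+ 2) / 4 by field.
by rewrite h; field; done.
Qed.

Lemma F3 : cT ^+ 2 * 2 < 184 / 100 /\ sT ^+ 2 * 2 < 184 / 100.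
Proof.
have e : sT ^+ 2 = 1 - cT ^+ 2 by rewrite -F1; ring.
rewrite e hc; have := hk; set k := cos _ => h.
have : k < 84 / 100 by nra.
have : - (84 / 100) < k by nra.
move=> h1 h2; split; lra.
Qed.


Definition M2 (p q r : R) : 'M[C]_2 :=
  \matrix_(i, j) (if i == 0 then (if j == 0 then p else q)
                  else (if j == 0 then q else r))%:C.

Lemma quad (p q r x y : R) : 0 < p -> q ^+ 2 <= p * r ->
  0 <= p * x ^+ 2 + q * x * y *+ 2 + r * y ^+ 2.
Proof.
move=> hp hq.
have h : p * (p * x ^+ 2 + q * x * y *+ 2 + r * y ^+ 2) =
   (p * x + q * y) ^+ 2 + (p * r - q ^+ 2) * y ^+ 2 by ring.
have : 0 <= p * (p * x ^+ 2 + q * x * y *+ 2 + r * y ^+ 2).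
  rewrite h; apply: addr_ge0; first exact: sqr_ge0.
  by apply: mulr_ge0; [rewrite subr_ge0 | exact: sqr_ge0].
by rewrite pmulr_rge0.
Qed.

Lemma psd2 p q r : 0 < p -> 0 <= r -> q ^+ 2 <= p * r -> psd (M2 p q r).
Proof.
move=> hp hr hq v.
rewrite !mxE !big_ord_recl !big_ord0 !mxE !big_ord_recl !big_ord0 !mxE /=.
case: (v ord0 0) => a b; case: (v (lift ord0 ord0) 0) => c d.
rewrite lecE /=; apply/andP; split; first by apply/eqP; ring.
have h1 := quad a c hp hq; have h2 := quad b d hp hq.
have -> : (a * p - - b * 0 + (c * q - - d * 0 + 0)) * a -
   (a * 0 + - b * p + (c * 0 + - d * q + 0)) * b +
   ((a * q - - b * 0 + (c * r - - d * 0 + 0)) * c -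
    (a * 0 + - b * q + (c * 0 + - d * r + 0)) * d + 0) =
  (p * a ^+ 2 + q * a * c *+ 2 + r * c ^+ 2) +
  (p * b ^+ 2 + q * b * d *+ 2 + r * d ^+ 2) by ring.
exact: addr_ge0.
Qed.


Lemma Pbx_M2 b x : Pbx R b x = M2 (ca b x ^+ 2) (ca b x * sa b x) (sa b x ^+ 2).
Proof.
apply/matrixP => i j; rewrite !mxE big_ord1 !mxE.
case: i => -[|[|//]] hi; case: j => -[|[|//]] hj /=;
  rewrite ?cos_angle ?sin_angle; apply/eqP; rewrite eq_complex /=; apply/andP; split; apply/eqP; ring.
Qed.

Lemma M2D p q r p' q' r' : M2 p q r + M2 p' q' r' = M2 (p + p') (q + q') (r + r').
Proof.
apply/matrixP => i j; rewrite !mxE.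
by case: i => -[|[|//]] hi; case: j => -[|[|//]] hj /=; rewrite -rmorphD.
Qed.

Lemma M2B p q r p' q' r' : M2 p q r - M2 p' q' r' = M2 (p - p') (q - q') (r - r').
Proof.
apply/matrixP => i j; rewrite !mxE.
by case: i => -[|[|//]] hi; case: j => -[|[|//]] hj /=; rewrite -rmorphB.
Qed.

Lemma M2Z (s p q r : R) : s%:C *: M2 p q r = M2 (s * p) (s * q) (s * r).
Proof.
apply/matrixP => i j; rewrite !mxE.
by case: i => -[|[|//]] hi; case: j => -[|[|//]] hj /=; rewrite -rmorphM.
Qed.

Lemma M2scal (t : R) : M2 t 0 t = (t%:C)%:M.
Proof.
apply/matrixP => i j; rewrite !mxE.
by case: i => -[|[|//]] hi; case: j => -[|[|//]] hj /=.
Qed.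

Lemma trM2 p q r p' q' r' :
  \tr (M2 p q r *m M2 p' q' r') = (p * p' + q * q' *+ 2 + r * r')%:C.
Proof.
rewrite /mxtrace !big_ord_recl !big_ord0 !mxE !big_ord_recl !big_ord0 !mxE /=.
rewrite -!rmorphM -!rmorphD; congr (_%:C); ring.
Qed.


Lemma sq1 : (cT ^+ 2 + sT ^+ 2) ^+ 2 = 1.
Proof. by rewrite F1 expr1n. Qed.

Lemma trP o b x : \tr (Pbx R o x *m Pbx R b x) = (o == b)%:R.
Proof.
rewrite !Pbx_M2 trM2; have h := sq1.
case: o; case: b; case: x; rewrite /ca /sa /=; apply/eqP; rewrite eq_complex /=;
  rewrite eqxx andbT; apply/eqP; first [ring | rewrite -h; ring].
Qed.


Lemma sumb (F : bool -> C) : \sum_(b : bool) F b = F true + F false.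
Proof. exact: big_bool. Qed.

Lemma sum_ind (T : finType) (v : T) (k : C) (P : bool) :
  \sum_(t : T) k * (P && (t == v))%:R = k * P%:R.
Proof.
rewrite (bigD1 v) //= eqxx andbT big1 ?addr0 // => t /negbTE ->.
by rewrite andbF mulr0.
Qed.

Lemma hp_eq ca cb : honest_prob R ca cb =
  \sum_(b : bool) \sum_(x : bool) \sum_(b' : bool)
     1 / 8 * ((ca == Some (b (+) b')) && (cb == Some (b (+) b')))%:R.
Proof.
apply: eq_bigr => b _; apply: eq_bigr => x _; apply: eq_bigr => b' _.
rewrite sumb !trP /bob_result.
by case: b; rewrite ?eqxx /= mulr1 mulr0 mul0r ?addr0 ?add0r.
Qed.

Lemma honest_ok :
  [/\ (forall ca cb : option bool, ca <> cb -> honest_prob R ca cb = 0),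
      honest_probA R None = 0,
      honest_probA R (Some false) = 1 / 2 &
      honest_probA R (Some true) = 1 / 2].
Proof.
have hA c : honest_probA R (Some c) = 1 / 2.
  rewrite /honest_probA.
  under eq_bigr => cb _ do rewrite hp_eq.
  rewrite exchange_big /=.
  transitivity (\sum_(b : bool) \sum_(x : bool) (1 / 8 : C)).
    apply: eq_bigr => b _; rewrite exchange_big; apply: eq_bigr => x _.
    rewrite exchange_big /=.
    under eq_bigr => b' _ do rewrite sum_ind.
    rewrite sumb; by case: b; case: c; rewrite /= ?mulr1 ?mulr0 ?addr0 ?add0r.
  by rewrite !sumb; field.
split.
- move=> a1 a2 hne; rewrite hp_eq.
  apply: big1 => b _; apply: big1 => x _; apply: big1 => b' _.
  have -> : (a1 == Some (b (+) b')) && (a2 == Some (b (+) b')) = false.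
    by apply/negbTE/andP => -[/eqP h1 /eqP h2]; apply: hne; rewrite h1 h2.
  by rewrite mulr0.
- rewrite /honest_probA; apply: big1 => cb _; rewrite hp_eq.
  apply: big1 => b _; apply: big1 => x _; apply: big1 => b' _.
  by rewrite /= mulr0.
- exact: hA.
- exact: hA.
Qed.


Definition u : R := 42 / 100.

Definition G (b : bool) : 'M[C]_2 := M2 (ca b false ^+ 2 + u) 0 (sa b false ^+ 2 + u).

Definition K (c b' b x : bool) : 'M[C]_2 :=
  G (c (+) b') - ((b == c (+) b')%:R : C) *: Pbx R b x.

Lemma u_gt0 : 0 < u. Proof. by rewrite /u; lra. Qed.

Lemma ca2 b x : ca b x ^+ 2 = ca b false ^+ 2.
Proof. by case: b; case: x; rewrite /ca ?sqrrN. Qed.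
Lemma sa2 b x : sa b x ^+ 2 = sa b false ^+ 2.
Proof. by case: b; case: x; rewrite /sa ?sqrrN. Qed.
Lemma casa b x : (ca b x * sa b x) ^+ 2 = cT ^+ 2 * sT ^+ 2.
Proof. case: b; case: x; rewrite /ca /sa; ring. Qed.

Lemma psd_G b : psd (G b).
Proof.
apply: psd2.
- by apply: ltr_pwDr; [exact: u_gt0 | exact: sqr_ge0].
- by apply: addr_ge0; [exact: sqr_ge0 | exact: ltW u_gt0].
- rewrite expr0n /=; apply: mulr_ge0; apply: addr_ge0;
    (exact: sqr_ge0 || exact: ltW u_gt0).
Qed.

Lemma psd_K c b' b x : psd (K c b' b x).
Proof.
rewrite /K; have [->|ne] := eqVneq b (c (+) b').
  rewrite mulr1n scale1r /G Pbx_M2 M2B ca2 sa2.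
  have -> : ca (c (+) b') false ^+ 2 + u - ca (c (+) b') false ^+ 2 = u by ring.
  have -> : sa (c (+) b') false ^+ 2 + u - sa (c (+) b') false ^+ 2 = u by ring.
  apply: psd2; [exact: u_gt0 | exact: ltW u_gt0 |].
  rewrite sub0r sqrrN casa F2 /u; lra.
rewrite mulr0n scale0r subr0; exact: psd_G.
Qed.


End Spec.

Section Spec2. Variable R : realType. Local Notation C := R[i]. Local Open Scope complex_scope.
Local Notation K := (@K R). Local Notation G := (@G R). Local Notation M2 := (@M2 R).
Local Notation u := (@u R). Local Notation ca := (@ca R). Local Notation sa := (@sa R). Local Notation cT := (@cT R). Local Notation sT := (@sT R).
Definition TrA d (rho : 'M[C]_(2 * d)) (A : 'M[C]_2) (B : 'M[C]_d) :=
  \tr ((A *t B) *m rho).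

Lemma TrA_K d (rho : 'M[C]_(2 * d)) c b' b x B :
  TrA rho (K c b' b x) B = TrA rho (G (c (+) b')) B
     - (b == c (+) b')%:R * TrA rho (Pbx R b x) B.
Proof.
by rewrite /TrA /K tensmxDl tensmxNl tensmxZl mulmxDl mulNmx -scalemxAl
  -scaleNr mxtraceD mxtraceZ mulNr.
Qed.

Lemma TrA_sum d (rho : 'M[C]_(2 * d)) (I : finType) A (B : I -> 'M[C]_d) :
  TrA rho A (\sum_i B i) = \sum_i TrA rho A (B i).
Proof. by rewrite /TrA tensmx_sumr mulmx_suml raddf_sum. Qed.

Lemma ind_eq (t : bool -> C) c b b' x :
  1 / 2 * t true * (Some c == bob_result b x b' true)%:R +
  1 / 2 * t false * (Some c == bob_result b x b' false)%:R =
  1 / 2 * (b == c (+) b')%:R * t b.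
Proof.
have -> : t b = if b then t true else t false by case: b.
move: (t true) (t false) => t1 t2.
by case: b; case: b'; case: c; rewrite /bob_result /=; ring.
Qed.

Lemma probA_eq d (rho : 'M[C]_(2 * d)) M c :
  cheatA_probB rho M (Some c) =
  \sum_(b' : bool) \sum_(b : bool) \sum_(x : bool)
     (1 / 2 * (b == c (+) b')%:R * TrA rho (Pbx R b x) (M b' (b, x))).
Proof.
apply: eq_bigr => b' _; apply: eq_bigr => b _; apply: eq_bigr => x _.
rewrite sumb.
exact: (ind_eq (fun o => TrA rho (Pbx R o x) (M b' (b, x)))).
Qed.


Lemma half_ge0 : 0 <= (1 / 2 : C).
Proof. by rewrite divr_ge0 ?ler01 ?ler0n. Qed.

Lemma halfu : (1 / 2 : C) * (1 + 2 * u)%:C = (1 / 2 + u)%:C.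
Proof.
rewrite !rmorphD rmorphM fmorph_div !rmorph1 !rmorph_nat.
by field.
Qed.

Lemma GG : G true + G false = ((1 + 2 * u)%:C)%:M.
Proof.
rewrite /G M2D -M2scal /ca /sa addr0; have h := F1.
congr M2; move: (F1 R); rewrite ?sqrrN; lra.
Qed.

Lemma alice_bound d (rho : 'M[C]_(2 * d)) M : cheatA_strategy rho M ->
  forall c, cheatA_probB rho M (Some c) <= (1 / 2 + u)%:C.
Proof.
move=> [[hrho trrho] hM] c.
have sumM b' A : \sum_(b : bool) \sum_(x : bool) TrA rho A (M b' (b, x)) = TrA rho A 1%:M.
  rewrite -(proj2 (hM b')) TrA_sum pair_bigA /=; by apply: eq_bigr => -[].
have GTF : forall c0 : bool, TrA rho (G (c0 (+) true)) 1%:M + TrA rho (G (c0 (+) false)) 1%:M =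
            TrA rho (G true + G false) 1%:M.
  move=> c0; rewrite /TrA tensmxDl mulmxDl mxtraceD.
  by case: c0 => //=; rewrite addrC.
set S := \sum_(b' : bool) \sum_(b : bool) \sum_(x : bool)
   1 / 2 * TrA rho (K c b' b x) (M b' (b, x)).
have E1 : cheatA_probB rho M (Some c) + S =
    \sum_(b' : bool) \sum_(b : bool) \sum_(x : bool)
      1 / 2 * TrA rho (G (c (+) b')) (M b' (b, x)).
  rewrite probA_eq /S -big_split; apply: eq_bigr => b' _.
  rewrite -big_split; apply: eq_bigr => b _.
  rewrite -big_split; apply: eq_bigr => x _ /=.
  rewrite TrA_K.
  move: (TrA rho (Pbx R b x) _) (TrA rho (G _) _) ((b == c (+) b')%:R) => tP tG s.
  ring.
have E2 : \sum_(b' : bool) \sum_(b : bool) \sum_(x : bool)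
      1 / 2 * TrA rho (G (c (+) b')) (M b' (b, x)) = (1 / 2 + u)%:C.
  transitivity (\sum_(b' : bool) 1 / 2 * TrA rho (G (c (+) b')) 1%:M).
    apply: eq_bigr => b' _; rewrite -(sumM b') mulr_sumr; apply: eq_bigr => b _.
    by rewrite mulr_sumr.
  rewrite sumb -mulrDr.
  rewrite GTF.
  by rewrite GG /TrA tens_scal1 mul_scalar_mx mxtraceZ trrho mulr1 halfu.
rewrite -subr_ge0 -E2 -E1 addrC addKr.
apply: sumr_ge0 => b' _; apply: sumr_ge0 => b _; apply: sumr_ge0 => x _.
apply: mulr_ge0; first exact: half_ge0.
rewrite /TrA; apply: tr_psd => //; apply: psd_tens; first exact: psd_K.
exact: (proj1 (hM b')).
Qed.


Definition TrB d (sigma : 'M[C]_d) (E : bool -> 'M[C]_(2 * d)) (A : 'M[C]_2) b' :=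
  \tr (E b' *m (A *t sigma)).

Definition T2 : 'M[C]_2 := ((1 + 2 * u)%:C)%:M.

Definition L (c b' : bool) : 'M[C]_2 :=
  T2 - (Pbx R (c (+) b') true + Pbx R (c (+) b') false).

Lemma psd_L c b' : psd (L c b').
Proof.
rewrite /L /T2 -M2scal !Pbx_M2 M2D M2B.
have [h1 h2] := F3 R.
have -> : ca (c (+) b') true * sa (c (+) b') true +
          ca (c (+) b') false * sa (c (+) b') false = 0.
  by case: (c (+) b'); rewrite /ca /sa; ring.
rewrite ca2 sa2 subr0.
apply: psd2.
- rewrite subr_gt0; case: (c (+) b'); rewrite /ca /u; lra.
- rewrite subr_ge0; case: (c (+) b'); rewrite /sa /u ?sqrrN; lra.
- by rewrite expr0n /= mulr_ge0 // subr_ge0;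
    case: (c (+) b'); rewrite /ca /sa /u ?sqrrN; lra.
Qed.

Lemma TrB_L d (sigma : 'M[C]_d) E c b' :
  TrB sigma E (L c b') b' = TrB sigma E T2 b'
    - (TrB sigma E (Pbx R (c (+) b') true) b' + TrB sigma E (Pbx R (c (+) b') false) b').
Proof.
rewrite /TrB /L tensmxDl tensmxNl tensmxDl mulmxDr mulmxN mulmxDr opprD !mxtraceD.
by rewrite !raddfN opprD.
Qed.

Lemma indB (t : bool -> bool -> C) c b' :
  \sum_(b : bool) \sum_(x : bool) (1 / 4 * t b x * (Some c == Some (b (+) b'))%:R) =
  1 / 4 * (t (c (+) b') true + t (c (+) b') false).
Proof.
rewrite !sumb.
by case: c; case: b'; rewrite /=; move: (t true true) (t true false) (t false true) (t false false) => a1 a2 a3 a4; ring.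
Qed.

Lemma probB_eq d (sigma : 'M[C]_d) E c :
  cheatB_probA sigma E (Some c) =
  \sum_(b' : bool) 1 / 4 * (TrB sigma E (Pbx R (c (+) b') true) b'
                           + TrB sigma E (Pbx R (c (+) b') false) b').
Proof.
rewrite /cheatB_probA.
under eq_bigr => b _ do rewrite exchange_big.
rewrite exchange_big; apply: eq_bigr => b' _ /=.
exact: (indB (fun b x => TrB sigma E (Pbx R b x) b')).
Qed.

End Spec2.

Section Spec3. Variable R : realType. Local Notation C := R[i]. Local Open Scope complex_scope.
Local Notation K := (@K R). Local Notation G := (@G R). Local Notation M2 := (@M2 R).
Local Notation u := (@u R). Local Notation ca := (@ca R). Local Notation sa := (@sa R). Local Notation cT := (@cT R). Local Notation sT := (@sT R).
Local Notation L := (@L R). Local Notation T2 := (@T2 R).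

Lemma bob_bound d (sigma : 'M[C]_d) E : cheatB_strategy sigma E ->
  forall c, cheatB_probA sigma E (Some c) <= (1 / 2 + u)%:C.
Proof.
move=> [[hs trs] [hE sE]] c.
have sE2 : E true + E false = 1%:M by move: sE; rewrite big_bool.
have HT : \sum_(b' : bool) 1 / 4 * TrB sigma E T2 b' = (1 / 2 + u)%:C.
  rewrite -mulr_sumr sumb /TrB -mxtraceD -mulmxDl sE2 mul1mx mxtrace_tens /T2.
  by rewrite mxtrace_scalar trs mulr1 -halfu; field.
rewrite -subr_ge0 probB_eq -HT -sumrB.
apply: sumr_ge0 => b' _; rewrite -mulrBr; apply: mulr_ge0.
  by rewrite divr_ge0 ?ler01 ?ler0n.
rewrite -TrB_L /TrB; apply: tr_psd; first exact: hE.
apply: psd_tens; [exact: psd_L | exact: hs].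
Qed.

End Spec3.

Theorem theorem2 (R : realType) :
  exists delta : R, delta <= 42 / 100 /\ coin_flipping_with_bias delta.
Proof.
exists (42 / 100); split => //.
split; first exact: honest_ok.
split.
- move=> d rho M h b; exact: alice_bound.
- move=> d sigma E h b; exact: bob_bound.
Qed.
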